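(* Let $n \ge 2$ be an integer, let $\mathcal{H}$ be a separable Hilbert space, and let $X \subset \mathcal{H}$ be a subset consisting of exactly $n$ points, equipped with the metric induced from $\mathcal{H}$. Then for every $0 < \alpha < 1$ the snowflake space $X^{\alpha}$ cannot be isometrically embedded into the Euclidean space $E^{n-2}$.
   Context: $E^k$ denotes the $k$-dimensional Euclidean space. For a metric space $(X,d)$ and $0<\alpha<1$, the snowflake space $X^{\alpha}$ is the set $X$ equipped with the metric $d^{\alpha}(x,y) = d(x,y)^{\alpha}$. *)

(* Defs.v *)
From HB Require Import structures.
From mathcomp Require Import all_boot all_order all_algebra.
From mathcomp Require Import all_classical all_reals all_analysis.
Set Implicit Arguments. Unset Strict Implicit. Unset Printing Implicit Defensive.
Import Order.TTheory GRing.Theory Num.Theory.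
Local Open Scope ring_scope.

Definition is_inner_product (R : realType) (V : lmodType R) (ip : V -> V -> R) :=
  [/\ (forall (a : R) (x y z : V), ip (a *: x + y) z = a * ip x z + ip y z),
      (forall x y : V, ip x y = ip y x),
      (forall x : V, 0 <= ip x x) &
      (forall x : V, ip x x = 0 -> x = 0)].

Definition ip_dist (R : realType) (V : lmodType R) (ip : V -> V -> R) (x y : V) : R :=
  Num.sqrt (ip (x - y) (x - y)).

Definition ip_complete (R : realType) (V : lmodType R) (ip : V -> V -> R) :=
  forall u : nat -> V,
    (forall e : R, 0 < e -> exists N : nat, forall m k : nat,
        (N <= m)%N -> (N <= k)%N -> ip_dist ip (u m) (u k) < e) ->
    exists l : V, forall e : R, 0 < e -> exists N : nat, forall m : nat,
        (N <= m)%N -> ip_dist ip (u m) l < e.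

Definition ip_separable (R : realType) (V : lmodType R) (ip : V -> V -> R) :=
  exists D : nat -> V, forall (x : V) (e : R), 0 < e ->
    exists k : nat, ip_dist ip x (D k) < e.

Definition separable_hilbert (R : realType) (V : lmodType R) (ip : V -> V -> R) :=
  [/\ is_inner_product ip, ip_complete ip & ip_separable ip].

Definition eucl_dist (R : realType) (k : nat) (p q : 'rV[R]_k) : R :=
  Num.sqrt (\sum_(i < k) (p 0 i - q 0 i) ^+ 2).

(* Main.v *)
Require Import Defs.
From HB Require Import structures.
From mathcomp Require Import all_boot all_order all_algebra.
From mathcomp Require Import all_classical all_reals all_analysis.
From mathcomp Require Import ring lra.
Import Order.TTheory GRing.Theory Num.Theory.
Local Open Scope ring_scope.
Section Grid.
Variable R : realType.
Variables (al h : R).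
Hypotheses (al0 : 0 < al) (al1 : al < 1) (h0 : 0 < h).

Definition uu (r t : R) := expR (- (r * h * al)) * (1 - expR (- (expR (r * h) * t))).
Definition aa (i : nat) t := uu i%:R t.
Definition bb (i : nat) t := uu (- (i.+1)%:R) t.
Definition SS (M : nat) t := \sum_(0 <= i < M) (aa i t + bb i t).

Lemma uu_ge0 r (t : R) : 0 <= t -> 0 <= uu r t.
Proof.
move=> t0; rewrite /uu mulr_ge0 ?expR_ge0 // subr_ge0 expR_le1 oppr_le0.
by rewrite mulr_ge0 ?expR_ge0.
Qed.

Lemma uu_mono r (t t' : R) : 0 <= t -> t <= t' -> uu r t <= uu r t'.
Proof.
move=> t0 tt; rewrite /uu ler_wpM2l ?expR_ge0 // lerD2l lerN2 ler_expR lerN2.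
by rewrite ler_wpM2l ?expR_ge0.
Qed.

Lemma uu_shift r (t : R) : uu r (expR h * t) = expR (h * al) * uu (r + 1) t.
Proof.
rewrite /uu mulrA -expRD [RHS]mulrA -expRD.
have -> : h * al + - ((r + 1) * h * al) = - (r * h * al).
  by rewrite !mulrDl mul1r; lra.
have -> : (r + 1) * h = r * h + h by rewrite mulrDl mul1r.
by [].
Qed.

Lemma uu_le1 r (t : R) : 0 <= t -> uu r t <= expR (- (r * h * al)).
Proof.
move=> t0; rewrite /uu ler_piMr ?expR_ge0 // lerBlDr lerDl expR_ge0 //.
Qed.

Lemma uu_le2 r (t : R) : 0 <= t -> uu r t <= expR (- (r * h * al)) * expR (r * h) * t.
Proof.
move=> t0; rewrite /uu -[X in _ <= X]mulrA ler_wpM2l ?expR_ge0 //.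
have := expR_ge1Dx (- (expR (r * h) * t)); lra.
Qed.

Lemma sum_widen (g : nat -> R) M M' : (M <= M')%N -> (forall i, 0 <= g i) ->
  \sum_(0 <= i < M) g i <= \sum_(0 <= i < M') g i.
Proof.
move=> MM g0; rewrite (big_cat_nat (leq0n M) MM) /=.
by rewrite lerDl sumr_ge0.
Qed.

Lemma aa_ge0 i (t : R) : 0 <= t -> 0 <= aa i t. Proof. exact: uu_ge0. Qed.
Lemma bb_ge0 i (t : R) : 0 <= t -> 0 <= bb i t. Proof. exact: uu_ge0. Qed.

Lemma SS_widen M M' (t : R) : 0 <= t -> (M <= M')%N -> SS M t <= SS M' t.
Proof.
move=> t0 MM; rewrite /SS; apply: (sum_widen (fun i => aa i t + bb i t) _ _ MM).
by move=> i /=; apply: addr_ge0; [exact: aa_ge0 | exact: bb_ge0].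
Qed.

Lemma SS_ge0 M (t : R) : 0 <= t -> 0 <= SS M t.
Proof.
by move=> t0; apply: sumr_ge0 => i _; apply: addr_ge0; [exact: aa_ge0 | exact: bb_ge0].
Qed.

Lemma SS_mono M (t t' : R) : 0 <= t -> t <= t' -> SS M t <= SS M t'.
Proof.
move=> t0 tt; apply: ler_sum => i _; apply: lerD; exact: uu_mono.
Qed.

Definition qq := expR (- (h * al)).
Definition rr := expR (- (h * (1 - al))).

Lemma qq_lt1 : 0 < qq < 1.
Proof. by rewrite expR_gt0 expR_lt1 oppr_lt0 mulr_gt0. Qed.
Lemma rr_lt1 : 0 < rr < 1.
Proof. by rewrite expR_gt0 expR_lt1 oppr_lt0 mulr_gt0 // subr_gt0. Qed.

Lemma aa_le i (t : R) : 0 <= t -> aa i t <= qq ^+ i.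
Proof.
move=> t0; rewrite /qq -expRM_natl /aa. apply: (le_trans (uu_le1 _ _ t0)).
by rewrite ler_expR; lra.
Qed.

Lemma bb_le i (t : R) : 0 <= t -> bb i t <= t * rr ^+ i.+1.
Proof.
move=> t0; rewrite /rr -expRM_natl /bb; apply: (le_trans (uu_le2 _ _ t0)).
rewrite -expRD mulrC ler_wpM2l //  ler_expR.
rewrite -[(i.+1)%:R]/((i.+1)%:R : R); set k := (i.+1)%:R; lra.
Qed.

Definition Cb t := (1 - qq)^-1 + t * (rr / (1 - rr)).

Lemma SS_le M (t : R) : 0 <= t -> SS M t <= Cb t.
Proof.
move=> t0; rewrite /SS big_split /=; apply: lerD.
  apply: (le_trans (ler_sum _ (fun (i : nat) _ => aa_le i _ t0))).
  case/andP: qq_lt1 => q0 q1.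
  have qn : `|qq| < 1 by rewrite ger0_norm ?ltW.
  have G := @geometric_le_lim R M 1 qq ler01 q0 qn.
  have -> : \sum_(0 <= i < M) qq ^+ i = series (geometric 1 qq) M.
    rewrite /series /=; apply: eq_bigr => i _.
    by rewrite /geometric mul1r.
  by rewrite -div1r.
apply: (le_trans (ler_sum _ (fun (i : nat) _ => bb_le i _ t0))).
rewrite -mulr_sumr ler_wpM2l //.
case/andP: rr_lt1 => q0 q1.
have qn : `|rr| < 1 by rewrite ger0_norm ?ltW.
have G := @geometric_le_lim R M rr rr (ltW q0) q0 qn.
have -> : \sum_(0 <= i < M) rr ^+ i.+1 = series (geometric rr rr) M.
  rewrite /series /=; apply: eq_bigr => i _.
  by rewrite /geometric exprS.
by [].
Qed.


Definition FF t := limn (fun M => SS M t).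

Lemma SS_cvg (t : R) : 0 <= t -> cvgn (fun M => SS M t).
Proof.
move=> t0; apply/cvg_ex; exists (sup (range (fun M => SS M t))).
apply: nondecreasing_cvgn.
  by move=> m k mk; apply: SS_widen.
by exists (Cb t) => y [M _ <-]; apply: SS_le.
Qed.

Lemma SS_le_FF M (t : R) : 0 <= t -> SS M t <= FF t.
Proof.
move=> t0; apply: (nondecreasing_cvgn_le _ (SS_cvg _ t0) M).
by move=> m k mk; apply: SS_widen.
Qed.

Lemma FF_le (t X : R) : 0 <= t -> (forall M, SS M t <= X) -> FF t <= X.
Proof.
move=> t0 HX; apply: limr_le; first exact: SS_cvg.
by apply: nearW => M; apply: HX.
Qed.



Lemma aa_shift i (t : R) : aa i (expR h * t) = expR (h * al) * aa i.+1 t.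
Proof. by rewrite /aa uu_shift natr1. Qed.

Lemma bb_shiftS i (t : R) : bb i.+1 (expR h * t) = expR (h * al) * bb i t.
Proof. by rewrite /bb uu_shift -[(i.+2)%:R]natr1 opprD subrK. Qed.

Lemma bb_shift0 (t : R) : bb 0 (expR h * t) = expR (h * al) * aa 0 t.
Proof. by rewrite /bb /aa uu_shift addNr. Qed.

Lemma SS_shift M (t : R) : SS M.+1 (expR h * t) =
  expR (h * al) * (\sum_(0 <= i < M.+2) aa i t + \sum_(0 <= i < M) bb i t).
Proof.
rewrite /SS big_split /= [X in _ + X = _]big_nat_recl // bb_shift0.
have -> : \sum_(0 <= i < M.+1) aa i (expR h * t) = \sum_(0 <= i < M.+1) expR (h * al) * aa i.+1 t.
  by apply: eq_bigr => i _; rewrite aa_shift.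
have -> : \sum_(0 <= i < M) bb i.+1 (expR h * t) = \sum_(0 <= i < M) expR (h * al) * bb i t.
  by apply: eq_bigr => i _; rewrite bb_shiftS.
rewrite -!mulr_sumr [X in _ = _ * (X + _)]big_nat_recl //.
by rewrite !mulrDr addrA [X in X + _ = _]addrC.
Qed.

Lemma sumA_le M M' (t : R) : 0 <= t -> (M <= M')%N ->
  \sum_(0 <= i < M) aa i t <= \sum_(0 <= i < M') aa i t.
Proof. by move=> t0 MM; apply: (sum_widen (fun i => aa i t) _ _ MM) => i; exact: aa_ge0. Qed.

Lemma sumB_le M M' (t : R) : 0 <= t -> (M <= M')%N ->
  \sum_(0 <= i < M) bb i t <= \sum_(0 <= i < M') bb i t.
Proof. by move=> t0 MM; apply: (sum_widen (fun i => bb i t) _ _ MM) => i; exact: bb_ge0. Qed.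

Lemma expRhal_gt0 : 0 < expR (h * al). Proof. exact: expR_gt0. Qed.

Lemma FF_shift (t : R) : 0 <= t -> FF (expR h * t) = expR (h * al) * FF t.
Proof.
move=> t0; have et0 : 0 <= expR h * t by rewrite mulr_ge0 ?expR_ge0.
have e0 := expRhal_gt0.
apply/eqP; rewrite eq_le; apply/andP; split.
  apply: FF_le => // M; apply: (le_trans (SS_widen _ _ _ et0 (leqnSn M))).
  rewrite SS_shift ler_wpM2l ?expR_ge0 //.
  apply: (le_trans _ (SS_le_FF M.+2 _ t0)).
  rewrite /SS big_split /= lerD2l; exact: (sumB_le M M.+2 t t0 (leqW (leqnSn M))).
rewrite -ler_pdivlMl //; apply: FF_le => // M.
rewrite ler_pdivlMl //; apply: (le_trans _ (SS_le_FF M.+1 _ et0)).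
rewrite SS_shift ler_wpM2l ?expR_ge0 // /SS big_split /= lerD2r; exact: (sumA_le M M.+2 t t0 (leqW (leqnSn M))).
Qed.

Lemma FF_powP (k : nat) : FF (expR (k%:R * h)) = expR (k%:R * h * al) * FF 1.
Proof.
elim: k => [|k IH]; first by rewrite !mul0r expR0 mul1r.
have -> : (k.+1)%:R * h = h + k%:R * h by rewrite -natr1 mulrDl mul1r addrC.
rewrite expRD FF_shift ?expR_ge0 // IH mulrA -expRD; congr (expR _ * _).
by rewrite mulrDl.
Qed.

Lemma FF_powN (k : nat) : FF (expR (- (k%:R * h))) = expR (- (k%:R * h * al)) * FF 1.
Proof.
elim: k => [|k IH]; first by rewrite !mul0r oppr0 expR0 mul1r.
have E : - (k%:R * h) = h + - ((k.+1)%:R * h) by rewrite -natr1 mulrDl mul1r; lra.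
move: IH; rewrite E expRD FF_shift ?expR_ge0 // => IH.
have e0 := expRhal_gt0.
apply: (mulfI (lt0r_neq0 e0)); rewrite IH mulrA -expRD; congr (expR _ * _).
rewrite -natr1 !mulrDl !mul1r; lra.
Qed.

Lemma FF_int (z : int) : FF (expR (z%:~R * h)) = expR (z%:~R * h * al) * FF 1.
Proof.
case: z => k.
  by rewrite -[(Posz k)%:~R]/(k%:R) FF_powP.
rewrite NegzE intrN mulNr FF_powN mulNr.
by [].
Qed.

Lemma FF_mono (t t' : R) : 0 <= t -> t <= t' -> FF t <= FF t'.
Proof.
move=> t0 tt; apply: FF_le => // M; apply: (le_trans (SS_mono M _ _ t0 tt)).
by apply: SS_le_FF; apply: le_trans tt.
Qed.



Lemma FF0 : FF 0 = 0.
Proof.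
apply/eqP; rewrite eq_le; apply/andP; split.
  apply: FF_le => // M; rewrite le_eqVlt; apply/orP; left; apply/eqP.
  by apply: big1 => i _; rewrite /aa /bb /uu !mulr0 oppr0 expR0 subrr !mulr0 addr0.
exact: (le_trans (SS_ge0 0 _ (lexx 0)) (SS_le_FF 0 _ (lexx 0))).
Qed.

Lemma FF1_gt0 : 0 < FF 1.
Proof.
apply: (lt_le_trans _ (SS_le_FF 1 _ ler01)).
rewrite /SS big_nat1.
have := bb_ge0 0 _ ler01.
have : 0 < aa 0 1.
  by rewrite /aa /uu !mul0r oppr0 expR0 mul1r mul1r subr_gt0 expR_lt1 oppr_lt0.
lra.
Qed.

Lemma FF_approx (N : R) : 0 <= N ->
  `|FF N - FF 1 * N `^ al| <= FF 1 * (expR (h * al) - 1) * N `^ al.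
Proof.
move=> N0; case: (eqVneq N 0) => [->|Nn0].
  by rewrite FF0 powR0 ?lt0r_neq0 // !mulr0 subrr normr0.
have Npos : 0 < N by rewrite lt0r Nn0.
set z := Num.floor (ln N / h).
have /andP[z1 z2] := floor_itv (ln N / h).
rewrite -/z in z1 z2.
have lz1 : z%:~R * h <= ln N by rewrite -ler_pdivlMr.
have lz2 : ln N < (z + 1)%:~R * h by rewrite -ltr_pdivrMr.
have E1 : (z + 1)%:~R * h = h + z%:~R * h by rewrite intrD mulrDl mul1r addrC.
set lo := expR (z%:~R * h).
have lo0 : 0 <= lo by apply: expR_ge0.
have Nlo : lo <= N by rewrite -(lnK Npos) ler_expR.
have Nhi : N <= expR h * lo by rewrite -(lnK Npos) -expRD ler_expR -E1 ltW.
have F1 := FF_mono _ _ lo0 Nlo.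
have F2 := FF_mono _ _ (ltW Npos) Nhi.
rewrite FF_shift // /lo FF_int in F2; rewrite /lo FF_int in F1.
have P1 : expR (z%:~R * h * al) <= N `^ al.
  rewrite /powR (negPf Nn0) ler_expR.
  have := ler_wpM2r (ltW al0) lz1; lra.
have P2 : N `^ al <= expR (h * al) * expR (z%:~R * h * al).
  rewrite /powR (negPf Nn0) -expRD ler_expR.
  have := ler_wpM2r (ltW al0) (ltW lz2); rewrite E1; lra.
have f0 := FF1_gt0.
set L := expR (z%:~R * h * al) in P1 P2 F1 F2.
set e := expR (h * al) in P2 F2 *.
set p := N `^ al in P1 P2 *.
have e1 : 1 <= e by rewrite /e -expR0 ler_expR mulr_ge0 // ltW.
have Q1 : FF 1 * L <= FF 1 * p by rewrite ler_pM2l.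
have Q2 : FF 1 * p <= e * (FF 1 * L) by rewrite mulrCA ler_pM2l.
have Q3 : 0 <= (e - 1) * (FF 1 * p - FF 1 * L).
  by rewrite mulr_ge0 // subr_ge0.
rewrite ler_norml; apply/andP; split; nra.
Qed.



Lemma FF1_bound : h <= 1 -> FF 1 * (expR (h * al) - 1) <= expR 1 / (1 - al).
Proof.
move=> h1.
set x := h * al; set y := h * (1 - al).
have x0 : 0 < x by rewrite mulr_gt0.
have y0 : 0 < y by rewrite mulr_gt0 // subr_gt0.
set X := expR x; set Y := expR y.
have X1 : 1 < X by rewrite expR_gt1.
have Y1 : 1 < Y by rewrite expR_gt1.
have Xe : X <= expR 1.
  rewrite ler_expR /x; have := ler_wpM2r (ltW al0) h1; rewrite mul1r => H; exact: (le_trans H (ltW al1)).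
have Xx : X - 1 <= x * X.
  have := expR_ge1Dx (- x); rewrite expRN -/X => H.
  have X0 : 0 < X by lra.
  have := ler_wpM2r (ltW X0) H; rewrite mulVf ?gt_eqF //; lra.
have Yy : y <= Y - 1 by have := expR_ge1Dx y; rewrite -/Y; lra.
have FC := SS_cvg 1 ler01.
have F1 : FF 1 <= Cb 1 by apply: FF_le => // M; apply: SS_le.
apply: (le_trans (ler_wpM2r _ F1)); first by lra.
rewrite /Cb /qq /rr -/x -/y !expRN -/X -/Y mul1r.
have X0 : 0 < X by apply: lt_trans X1.
have Y0 : 0 < Y by apply: lt_trans Y1.
have al1' : 1 - al != 0 by rewrite subr_eq0 eq_sym lt_eqF.
have -> : ((1 - X^-1)^-1 + Y^-1 / (1 - Y^-1)) * (X - 1) = X + (X - 1) / (Y - 1).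
  field; rewrite subr_eq0 (gt_eqF Y1) (gt_eqF Y0) (gt_eqF X0) subr_eq0 (gt_eqF X1).
  by [].
have H2 : (X - 1) / (Y - 1) <= x * X / y.
  rewrite ler_pdivrMr ?subr_gt0 // mulrAC ler_pdivlMr //.
  apply: (le_trans (ler_wpM2r (ltW y0) Xx)).
  by rewrite ler_wpM2l // mulr_ge0 // ltW.
have H3 : x * X / y = (al / (1 - al)) * X.
  rewrite /x /y; field; rewrite al1' (gt_eqF h0) //.
rewrite H3 in H2.
have -> : expR 1 / (1 - al) = expR 1 + al / (1 - al) * expR 1.
  by field.
apply: lerD => //; apply: (le_trans H2); apply: ler_wpM2l => //.
by rewrite divr_ge0 // ?subr_ge0 ltW.
Qed.

End Grid.

Section PartB.
Import numFieldNormedType.Exports.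
Local Open Scope classical_set_scope.

Lemma cvg_sumr (R : realType) (I : Type) (r : seq I) (f : I -> nat -> R) (l : I -> R) :
  (forall i, f i k @[k --> \oo] --> l i) ->
  (\sum_(i <- r) f i k) @[k --> \oo] --> \sum_(i <- r) l i.
Proof.
move=> H; elim: r => [|i r IH].
  rewrite big_nil; under eq_fun do rewrite big_nil; exact: cvg_cst.
rewrite big_cons; under eq_fun do rewrite big_cons.
exact: cvgD.
Qed.

Section Core.
Variable R : realType.
Variables (al : R) (n : nat) (c : 'I_n -> R) (N : 'I_n -> 'I_n -> R).
Hypotheses (al0 : 0 < al) (al1 : al < 1).
Hypothesis csum : \sum_i c i = 0.
Hypothesis N0 : forall i j, 0 <= N i j.
Hypothesis Ndiag : forall i, N i i = 0.
Hypothesis Npos : forall i j : 'I_n, i != j -> 0 < N i j.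

Definition Pk (s : R) := \sum_i \sum_j c i * c j * expR (- (s * N i j)).
Hypothesis Pk_ge0 : forall s : R, 0 < s -> 0 <= Pk s.

Definition sig := \sum_i c i * c i.
Definition Zc := \sum_i \sum_j (if i == j then 0 else `|c i * c j| / N i j).
Definition LL (g : R -> R) := \sum_i \sum_j c i * c j * g (N i j).

Lemma Zc_ge0 : 0 <= Zc.
Proof.
apply: sumr_ge0 => i _; apply: sumr_ge0 => j _; case: eqP => // /eqP ij.
by rewrite divr_ge0 // ltW // Npos _ _ ij.
Qed.

Lemma Pk_lb (s : R) : 0 < s -> sig - Zc / s <= Pk s.
Proof.
move=> s0.
have -> : sig - Zc / s = \sum_i \sum_j ((if i == j then c i * c j else 0)
    - (if i == j then 0 else `|c i * c j| / N i j) / s).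
  rewrite /sig /Zc mulr_suml.
  under [RHS]eq_bigr do rewrite sumrB -mulr_suml.
  rewrite sumrB; congr (_ - _).
  apply: eq_bigr => i _.
  by rewrite (bigD1 i) //= eqxx big1 ?addr0 // => j /negPf; rewrite eq_sym => ->.
apply: ler_sum => i _; apply: ler_sum => j _.
case: eqP => [->|/eqP ij]; first by rewrite Ndiag mulr0 oppr0 expR0 mulr1 mul0r subr0.
have Nij := Npos _ _ ij.
rewrite sub0r -mulNr.
have e0 : 0 < expR (- (s * N i j)) by apply: expR_gt0.
have eb : expR (- (s * N i j)) <= (s * N i j)^-1.
  rewrite expRN lef_pV2 ?posrE ?expR_gt0 ?mulr_gt0 //.
  by have := expR_ge1Dx (s * N i j); lra.
set x := c i * c j.
have A : - `|x| <= x by have : `|x| <= `|x| := lexx _; rewrite ler_norml => /andP[].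
have E : - (`|x| / N i j) / s = - (`|x| * (s * N i j)^-1).
  by field; rewrite (gt_eqF s0) (gt_eqF Nij).
rewrite E.
have P1 := ler_wpM2r (ltW e0) A.
have P2 := ler_wpM2l (normr_ge0 x) eb.
clearbody x; lra.
Qed.



Lemma sum_cc : \sum_i \sum_j c i * c j = 0.
Proof. by apply: big1 => i _; rewrite -mulr_sumr csum mulr0. Qed.

Lemma LL_w (w s : R) :
  \sum_i \sum_j c i * c j * (w * (1 - expR (- (s * N i j)))) = - (w * Pk s).
Proof.
apply/eqP; rewrite -subr_eq0 opprK /Pk mulr_sumr -big_split /=; apply/eqP.
apply: big1 => i _; rewrite mulr_sumr -big_split /=.
rewrite (eq_bigr (fun j => w * c i * c j)); last by move=> j _; ring.
by rewrite -mulr_sumr csum mulr0.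
Qed.

Lemma LL_SS (h : R) M : LL (SS R al h M) = - \sum_(0 <= k < M)
  (expR (- (k%:R * h * al)) * Pk (expR (k%:R * h)) +
   expR (- (- (k.+1)%:R * h * al)) * Pk (expR (- (k.+1)%:R * h))).
Proof.
rewrite /LL /SS.
under eq_bigr do under eq_bigr do rewrite mulr_sumr.
under eq_bigr do rewrite exchange_big.
rewrite exchange_big -sumrN; apply: eq_bigr => k _.
under eq_bigr do under eq_bigr do rewrite mulrDr.
under eq_bigr do rewrite big_split.
rewrite big_split /= opprD.
by rewrite /aa /bb /uu !LL_w.
Qed.



Lemma Pk_half (s : R) : 0 < sig -> 0 < s -> 2 * Zc / sig < s -> sig / 2 <= Pk s.
Proof.
move=> sg s0 hs; apply: le_trans (Pk_lb s s0).
have H : 2 * Zc < s * sig by move: hs; rewrite ltr_pdivrMr.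
have : Zc / s <= sig / 2.
  rewrite ler_pdivrMr //; lra.
lra.
Qed.



Lemma block (n0 A M : nat) : (0 < n0)%N -> 0 < sig -> 2 * Zc / sig < A%:R ->
  (n0 * A.+1 <= M)%N ->
  n0%:R * (expR (- (A.+1)%:R) * (sig / 2)) <=
  \sum_(0 <= k < M) expR (- (k%:R * n0%:R^-1 * al)) * Pk (expR (k%:R * n0%:R^-1)).
Proof.
move=> n0p sg hA hM.
have n0r : 0 < n0%:R :> R by rewrite ltr0n.
have tg0 : forall k : nat, 0 <= expR (- (k%:R * n0%:R^-1 * al)) * Pk (expR (k%:R * n0%:R^-1)).
  by move=> k; rewrite mulr_ge0 ?expR_ge0 // Pk_ge0 // expR_gt0.
have h1 : (n0 * A <= n0 * A.+1)%N by rewrite leq_mul2l leqnSn orbT.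
rewrite (big_cat_nat (leq0n (n0 * A)) (leq_trans h1 hM)) /=.
rewrite (big_cat_nat h1 hM) /=.
have S1 : 0 <= \sum_(0 <= k < n0 * A) expR (- (k%:R * n0%:R^-1 * al)) * Pk (expR (k%:R * n0%:R^-1)).
  by apply: sumr_ge0 => k _.
have S3 : 0 <= \sum_(n0 * A.+1 <= k < M) expR (- (k%:R * n0%:R^-1 * al)) * Pk (expR (k%:R * n0%:R^-1)).
  by apply: sumr_ge0 => k _.
suff S2 : n0%:R * (expR (- (A.+1)%:R) * (sig / 2)) <=
  \sum_(n0 * A <= k < n0 * A.+1) expR (- (k%:R * n0%:R^-1 * al)) * Pk (expR (k%:R * n0%:R^-1)).
  lra.
have -> : n0%:R * (expR (- (A.+1)%:R) * (sig / 2)) =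
    \sum_(n0 * A <= k < n0 * A.+1) (expR (- (A.+1)%:R) * (sig / 2)).
  by rewrite sumr_const_nat mulnS addnK mulr_natl.
apply: ler_sum_nat => k /andP[k1 k2].
have hk1 : (A%:R : R) <= k%:R * n0%:R^-1.
  by rewrite ler_pdivlMr // -natrM ler_nat mulnC.
have hk2 : k%:R * n0%:R^-1 < (A.+1%:R : R).
  by rewrite ltr_pdivrMr // -natrM ltr_nat mulnC.
have k0 : 0 <= (k%:R : R) * n0%:R^-1 by rewrite mulr_ge0 // invr_ge0 ltW.
apply: ler_pM.
- exact: expR_ge0.
- by rewrite divr_ge0 // ltW.
- rewrite ler_expR lerN2.
  have := ler_wpM2l k0 (ltW al1); rewrite mulr1 => H.
  exact: le_trans H (ltW hk2).
apply: Pk_half; [exact: sg | exact: expR_gt0 | ].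
apply: (lt_le_trans hA); apply: le_trans (expR_ge1Dx _).
by apply: le_trans hk1 _; rewrite lerDr.
Qed.



Theorem snt : (exists i, c i != 0) -> LL (fun t => t `^ al) < 0.
Proof.
move=> [i0 ci0].
have sg : 0 < sig.
  rewrite /sig (bigD1 i0) //=.
  have : 0 <= \sum_(i | i != i0) c i * c i.
    by apply: sumr_ge0 => i _; rewrite -expr2 sqr_ge0.
  have : 0 < c i0 * c i0.
    by move: ci0; rewrite neq_lt => /orP[H|H]; nra.
  lra.
pose W := \sum_i \sum_j `|c i * c j| * N i j `^ al.
have W0 : 0 <= W.
  by apply: sumr_ge0 => i _; apply: sumr_ge0 => j _; rewrite mulr_ge0 ?powR_ge0.
pose A := (Num.truncn (2 * Zc / sig)).+1.
have hA : 2 * Zc / sig < A%:R by exact: truncnS_gt.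
pose E := expR 1 / (1 - al).
have E0 : 0 <= E by rewrite divr_ge0 ?expR_ge0 // subr_ge0 ltW.
pose K := E * W * 2 * expR (A.+1)%:R / sig.
pose n0 := (Num.truncn K).+1.
have hK : K < n0%:R by exact: truncnS_gt.
have n0p : (0 < n0)%N by [].
pose h := (n0%:R : R)^-1.
have n0r : 1 <= (n0%:R : R) by rewrite ler1n.
have h0 : 0 < h by rewrite invr_gt0 ltr0n.
have h1 : h <= 1 by rewrite invf_le1 // (lt_le_trans ltr01).
pose F := FF R al h.
have F1p : 0 < F 1 := FF1_gt0 R al h al0 al1 h0.
have Hcv : (fun M => LL (SS R al h M)) @ \oo --> LL F.
  rewrite /LL; apply: cvg_sumr => i; apply: cvg_sumr => j.
  apply: cvgMl_tmp; exact: (SS_cvg R al h al0 al1 h0 (N i j) (N0 i j)).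
pose Q := n0%:R * (expR (- (A.+1)%:R) * (sig / 2)).
have LLF : LL F <= - Q.
  rewrite -(cvg_lim _ Hcv) //; apply: limr_le; first by apply/cvg_ex; exists (LL F).
  near=> M.
  have hM : (n0 * A.+1 <= M)%N by near: M; exact: nbhs_infty_ge.
  rewrite LL_SS lerN2 big_split /=.
  have := block n0 A M n0p sg hA hM.
  have : 0 <= \sum_(0 <= k < M) expR (- (- (k.+1)%:R * h * al)) * Pk (expR (- (k.+1)%:R * h)).
    by apply: sumr_ge0 => k _; rewrite mulr_ge0 ?expR_ge0 // Pk_ge0 // expR_gt0.
  rewrite /Q /h; lra.
pose G := F 1 * (expR (h * al) - 1).
have HB : G <= E := FF1_bound R al h al0 al1 h0 h1.
have Happ : - (G * W) <= LL F - F 1 * LL (fun t => t `^ al).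
  have -> : LL F - F 1 * LL (fun t => t `^ al) =
      \sum_i \sum_j c i * c j * (F (N i j) - F 1 * N i j `^ al).
    rewrite /LL mulr_sumr -sumrB; apply: eq_bigr => i _.
    rewrite mulr_sumr -sumrB; apply: eq_bigr => j _; ring.
  have -> : - (G * W) = \sum_i \sum_j - (`|c i * c j| * (G * N i j `^ al)).
    rewrite /W mulr_sumr -sumrN; apply: eq_bigr => i _.
    rewrite mulr_sumr -sumrN; apply: eq_bigr => j _; ring.
  apply: ler_sum => i _; apply: ler_sum => j _.
  have Ha := FF_approx R al h al0 al1 h0 (N i j) (N0 i j).
  rewrite -/F -/G in Ha.
  set x := c i * c j; set d := F (N i j) - F 1 * N i j `^ al in Ha *.
  have H1 : - `|x * d| <= x * d.
    by have : `|x * d| <= `|x * d| := lexx _; rewrite ler_norml => /andP[].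
  rewrite normrM in H1.
  have H2 := ler_wpM2l (normr_ge0 x) Ha.
  clearbody x d; lra.
have HQ : E * W < Q.
  have Qp : 0 < expR (- (A.+1)%:R) * (sig / 2) by rewrite mulr_gt0 ?expR_gt0 ?divr_gt0.
  have H := hK; rewrite -(ltr_pM2r Qp) in H.
  have E1 : K * (expR (- (A.+1)%:R) * (sig / 2)) = E * W.
    rewrite /K expRN; field; rewrite gt_eqF ?expR_gt0 // gt_eqF //.
  by rewrite E1 in H.
have HGW : G * W <= E * W by rewrite ler_wpM2r.
have Hfin : F 1 * LL (fun t => t `^ al) < 0.
  clearbody F G Q W E; lra.
by rewrite pmulr_rlt0 in Hfin.
Unshelve. all: by end_near.
Qed.

End Core.

End PartB.

Section PartC.
Import numFieldNormedType.Exports.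
Local Open Scope classical_set_scope.

Lemma cvg_sumr2 (R : realType) (I : Type) (r : seq I) (f : I -> nat -> R) (l : I -> R) :
  (forall i, f i k @[k --> \oo] --> l i) ->
  (\sum_(i <- r) f i k) @[k --> \oo] --> \sum_(i <- r) l i.
Proof.
move=> H; elim: r => [|i r IH].
  rewrite big_nil; under eq_fun do rewrite big_nil; exact: cvg_cst.
rewrite big_cons; under eq_fun do rewrite big_cons.
exact: cvgD.
Qed.

Section Gauss.
Variable R : realType.
Variables (n m : nat) (a : 'I_n -> 'I_m -> R).
Definition Gm i j := \sum_p a i p * a j p.

Lemma schur k (b : 'I_n -> R) : 0 <= \sum_i \sum_j b i * b j * Gm i j ^+ k.
Proof.
elim: k b => [|k IH] b.
  have -> : \sum_i \sum_j b i * b j * Gm i j ^+ 0 = (\sum_i b i) ^+ 2.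
    rewrite expr2 mulr_suml.
    under eq_bigr => i _ do under eq_bigr => j _ do rewrite expr0 mulr1.
    by under [RHS]eq_bigr => i _ do rewrite mulr_sumr.
  exact: sqr_ge0.
have -> : \sum_i \sum_j b i * b j * Gm i j ^+ k.+1 =
    \sum_p \sum_i \sum_j (b i * a i p) * (b j * a j p) * Gm i j ^+ k.
  symmetry; rewrite exchange_big; apply: eq_bigr => i _; rewrite exchange_big.
  apply: eq_bigr => j _.
  have -> : Gm i j ^+ k.+1 = \sum_p Gm i j ^+ k * (a i p * a j p).
    by rewrite exprSr -mulr_sumr.
  rewrite mulr_sumr; apply: eq_bigr => p _; ring.
by apply: sumr_ge0 => p _; apply: IH.
Qed.

Lemma expPD t (b : 'I_n -> R) : 0 <= t ->
  0 <= \sum_i \sum_j b i * b j * expR (t * Gm i j).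
Proof.
move=> t0.
have Hc : (\sum_i \sum_j b i * b j * series (exp_coeff (t * Gm i j)) K) @[K --> \oo]
    --> \sum_i \sum_j b i * b j * expR (t * Gm i j).
  apply: cvg_sumr2 => i; apply: cvg_sumr2 => j.
  apply: cvgMl_tmp; exact: is_cvg_series_exp_coeff.
rewrite -(cvg_lim _ Hc) //; apply: limr_ge; first by apply/cvg_ex; eexists; exact: Hc.
apply: nearW => K; rewrite /series /=.
under eq_bigr do under eq_bigr do rewrite mulr_sumr.
under eq_bigr do rewrite exchange_big.
rewrite exchange_big; apply: sumr_ge0 => k _.
have -> : \sum_i \sum_j b i * b j * exp_coeff (t * Gm i j) k =
    (t ^+ k / k`!%:R) * \sum_i \sum_j b i * b j * Gm i j ^+ k.
  rewrite mulr_sumr; apply: eq_bigr => i _; rewrite mulr_sumr; apply: eq_bigr => j _.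
  rewrite /exp_coeff /= exprMn; ring.
by rewrite mulr_ge0 ?schur // divr_ge0 ?exprn_ge0.
Qed.

Lemma gaussPD (c : 'I_n -> R) s : 0 <= s ->
  0 <= \sum_i \sum_j c i * c j * expR (- (s * (Gm i i + Gm j j - 2 * Gm i j))).
Proof.
move=> s0.
have -> : \sum_i \sum_j c i * c j * expR (- (s * (Gm i i + Gm j j - 2 * Gm i j))) =
  \sum_i \sum_j (c i * expR (- (s * Gm i i))) * (c j * expR (- (s * Gm j j))) *
     expR ((2 * s) * Gm i j).
  apply: eq_bigr => i _; apply: eq_bigr => j _.
  have -> : - (s * (Gm i i + Gm j j - 2 * Gm i j)) =
    - (s * Gm i i) + (- (s * Gm j j) + (2 * s) * Gm i j) by ring.
  rewrite !expRD; ring.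
by apply: expPD; rewrite mulr_ge0.
Qed.

End Gauss.

End PartC.

Lemma lift_widen k (j : 'I_k) : lift ord_max j = widen_ord (leqnSn k) j.
Proof. by apply: val_inj; rewrite [LHS]lift_max. Qed.

Section GS.
Variable R : realType.
Variable V : lmodType R.
Variable ip : V -> V -> R.
Hypothesis Hip : is_inner_product ip.

Lemma ipZDl a x y z : ip (a *: x + y) z = a * ip x z + ip y z.
Proof. by case: Hip => H _ _ _; apply: H. Qed.
Lemma ipC x y : ip x y = ip y x.
Proof. by case: Hip => _ H _ _; apply: H. Qed.
Lemma ip_ge0 x : 0 <= ip x x.
Proof. by case: Hip => _ _ H _; apply: H. Qed.
Lemma ip_eq0 x : ip x x = 0 -> x = 0.
Proof. by case: Hip => _ _ _ H; apply: H. Qed.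

Lemma ip0l z : ip 0 z = 0.
Proof.
have := ipZDl 1 0 0 z; rewrite scaler0 addr0 mul1r => H; lra.
Qed.
Lemma ipDl x y z : ip (x + y) z = ip x z + ip y z.
Proof. by rewrite -[x]scale1r ipZDl mul1r scale1r. Qed.
Lemma ipZl a x z : ip (a *: x) z = a * ip x z.
Proof. by rewrite -[a *: x]addr0 ipZDl ip0l addr0. Qed.
Lemma ipNl x z : ip (- x) z = - ip x z.
Proof. by rewrite -scaleN1r ipZl mulN1r. Qed.
Lemma ipBl x y z : ip (x - y) z = ip x z - ip y z.
Proof. by rewrite ipDl ipNl. Qed.
Lemma ipDr x y z : ip z (x + y) = ip z x + ip z y.
Proof. by rewrite ipC ipDl ![ip _ z]ipC. Qed.
Lemma ipZr a x z : ip z (a *: x) = a * ip z x.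
Proof. by rewrite ipC ipZl ipC. Qed.
Lemma ipBr x y z : ip z (x - y) = ip z x - ip z y.
Proof. by rewrite ipC ipBl ![ip _ z]ipC. Qed.
Lemma ip_suml (I : Type) (r : seq I) (F : I -> V) z :
  ip (\sum_(i <- r) F i) z = \sum_(i <- r) ip (F i) z.
Proof.
elim: r => [|i r IH]; first by rewrite !big_nil ip0l.
by rewrite !big_cons ipDl IH.
Qed.
Lemma ip_sumr (I : Type) (r : seq I) (F : I -> V) z :
  ip z (\sum_(i <- r) F i) = \sum_(i <- r) ip z (F i).
Proof. by rewrite ipC ip_suml; apply: eq_bigr => i _; rewrite ipC. Qed.

Definition ON {m} (e : 'I_m -> V) := forall p q, ip (e p) (e q) = (p == q)%:R.

Lemma ON_coef m (e : 'I_m -> V) (f : 'I_m -> R) q : ON e ->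
  \sum_p f p * ip (e p) (e q) = f q.
Proof.
move=> He; rewrite (bigD1 q) //= He eqxx mulr1 big1 ?addr0 // => p /negPf pq.
by rewrite He pq mulr0.
Qed.

Lemma gs n (y : 'I_n -> V) : exists m (e : 'I_m -> V),
  ON e /\ forall i, y i = \sum_p ip (y i) (e p) *: e p.
Proof.
elim: n y => [|n IH] y.
  by exists 0%N, (fun _ => 0); split => [[]//|[]//].
have [m [e [He Hy]]] := IH (fun i => y (widen_ord (leqnSn n) i)).
pose z := y ord_max.
pose S := \sum_p ip z (e p) *: e p.
pose w := z - S.
have ipSe q : ip S (e q) = ip z (e q).
  by rewrite /S ip_suml (eq_bigr (fun p => ip z (e p) * ip (e p) (e q))) ?ON_coef // => p _; rewrite ipZl.
have wo q : ip w (e q) = 0 by rewrite /w ipBl ipSe subrr.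
have wspan (v : V) (b : 'I_m -> R) : v = \sum_p b p *: e p -> ip w v = 0.
  move=> ->; rewrite ip_sumr big1 // => p _; by rewrite ipZr wo mulr0.
case: (eqVneq (ip w w) 0) => [w0 | wn0].
  exists m, e; split => // i.
  case: (unliftP ord_max i) => [j ->|->].
    by rewrite lift_widen; exact: Hy.
  have : w = 0 by apply: ip_eq0.
  by rewrite /w => /eqP; rewrite subr_eq0 => /eqP.
have wpos : 0 < ip w w by rewrite lt0r wn0 ip_ge0.
pose r := Num.sqrt (ip w w).
have r0 : 0 < r by rewrite sqrtr_gt0.
have rr : r * r = ip w w by rewrite -expr2 sqr_sqrtr // ltW.
pose e' := fun p : 'I_m.+1 => if unlift ord_max p is Some q then e q else r^-1 *: w.
have e'l q : e' (lift ord_max q) = e q by rewrite /e' liftK.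
have e'm : e' ord_max = r^-1 *: w by rewrite /e' unlift_none.
have ww : ip (r^-1 *: w) (r^-1 *: w) = 1.
  by rewrite ipZl ipZr -rr; field; rewrite gt_eqF.
exists m.+1, e'; split.
  move=> p q.
  case: (unliftP ord_max p) => [p' ->|->]; case: (unliftP ord_max q) => [q' ->|->];
    rewrite ?e'l ?e'm.
  - by rewrite He (inj_eq (@lift_inj _ ord_max)).
  - by rewrite ipZr ipC wo mulr0 eq_sym (negPf (neq_lift _ _)).
  - by rewrite ipZl wo mulr0 (negPf (neq_lift _ _)).
  - by rewrite ww eqxx.
move=> i; rewrite big_ord_recr /=.
have -> : \sum_(p < m) ip (y i) (e' (widen_ord (leqnSn m) p)) *: e' (widen_ord (leqnSn m) p)
    = \sum_(p < m) ip (y i) (e p) *: e p.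
  by apply: eq_bigr => p _; rewrite -lift_widen e'l.
rewrite e'm.
case: (unliftP ord_max i) => [j ->|->].
  rewrite lift_widen.
  have Hj := Hy j.
  have -> : ip (y (widen_ord (leqnSn n) j)) (r^-1 *: w) = 0.
    by rewrite ipZr ipC (wspan _ _ Hj) mulr0.
  by rewrite scale0r addr0.
rewrite -/z.
have -> : ip z (r^-1 *: w) = r.
  rewrite ipZr ipC.
  have -> : z = w + S by rewrite /w subrK.
  rewrite ipDr (wspan S (fun p => ip z (e p))) // addr0 -rr.
  by field; rewrite gt_eqF.
rewrite scalerA mulrV ?unitfE ?gt_eqF // scale1r.
by rewrite -/S /w addrC subrK.
Qed.

Lemma gram n (y : 'I_n -> V) : exists m (a : 'I_n -> 'I_m -> R),
  forall i j, ip (y i) (y j) = \sum_p a i p * a j p.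
Proof.
have [m [e [He Hy]]] := gs _ y.
exists m, (fun i p => ip (y i) (e p)) => i j.
rewrite {1}(Hy i) ip_suml; apply: eq_bigr => p _.
by rewrite ipZl [ip (e p) _]ipC.
Qed.

End GS.

From mathcomp Require Import zify.
Lemma kernel_vec (R : realType) n d (f : 'I_n -> 'rV[R]_d) : (d.+1 < n)%N ->
  exists c : 'I_n -> R, (exists i, c i != 0) /\ \sum_i c i = 0 /\
    forall k, \sum_i c i * f i 0 k = 0.
Proof.
move=> dn.
pose A : 'M[R]_(n, 1 + d) := row_mx (const_mx 1) (\matrix_(i, k) f i 0 k).
have nrf : ~~ row_free A.
  rewrite /row_free; apply/negP => /eqP rk.
  by have := rank_leq_col A; rewrite rk leqNgt dn.
have Kn0 : kermx A != 0 by rewrite kermx_eq0.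
have [i0 Hi0] : exists i0, row i0 (kermx A) != 0.
  case: (pickP (fun i => row i (kermx A) != 0)) => [i0 Hi0 | H]; first by exists i0.
  move/eqP: Kn0; case; apply/row_matrixP => i.
  by move/negbFE: (H i) => /eqP ->; rewrite row0.
pose v := row i0 (kermx A).
have vA : v *m A = 0 by apply/sub_kermxP; exact: row_sub.
move: vA; rewrite mul_mx_row => /eqP; rewrite row_mx_eq0 => /andP[/eqP H1 /eqP H2].
exists (fun i => v 0 i); split; last split.
- case: (pickP (fun i => v 0 i != 0)) => [i Hi | H]; first by exists i.
  move: Hi0; rewrite -/v => /eqP; case; apply/rowP => i.
  by move/negbFE: (H i) => /eqP ->; rewrite mxE.
- have := congr1 (fun (M : 'M[R]_(1, 1)) => M 0 0) H1; rewrite !mxE /= => E.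
  rewrite -[RHS]E; apply: eq_bigr => i _; by rewrite !mxE mulr1.
- move=> k; have := congr1 (fun (M : 'M[R]_(1, d)) => M 0 k) H2; rewrite !mxE /= => E.
  rewrite -[RHS]E; apply: eq_bigr => i _; by rewrite !mxE.
Qed.

Lemma quad0 (R : realType) n (c u : 'I_n -> R) : \sum_i c i = 0 -> \sum_i c i * u i = 0 ->
  \sum_i \sum_j c i * c j * (u i - u j) ^+ 2 = 0.
Proof.
move=> cs cu.
transitivity (\sum_i (c i * u i ^+ 2 * (\sum_j c j) - 2 * (c i * u i) * (\sum_j c j * u j)
   + c i * (\sum_j c j * u j ^+ 2))).
  apply: eq_bigr => i _; rewrite !mulr_sumr -sumrB -big_split /=.
  by apply: eq_bigr => j _; ring.
rewrite cs cu.
under eq_bigr do rewrite !mulr0 subrr add0r.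
by rewrite -mulr_suml cs mul0r.
Qed.

Theorem theorem1 (R : realType) (V : lmodType R) (ip : V -> V -> R)
  (HV : separable_hilbert ip) (n : nat) (hn : (2 <= n)%N)
  (x : 'I_n -> V) (hx : injective x) (alpha : R)
  (ha0 : 0 < alpha) (ha1 : alpha < 1) :
  ~ exists f : 'I_n -> 'rV[R]_(n - 2),
      forall i j : 'I_n, eucl_dist (f i) (f j) = (ip_dist ip (x i) (x j)) `^ alpha.
Proof.
case=> f Hf.
case: HV => Hip _ _.
have dn : ((n - 2).+1 < n)%N by lia.
have [c [[i0 ci0] [cs cf]]] := kernel_vec _ _ _ f dn.
pose N i j := ip (x i - x j) (x i - x j).
have [m [a Ha]] := gram _ _ _ Hip _ x.
have NG : forall i j, N i j = Gm _ _ _ a i i + Gm _ _ _ a j j - 2 * Gm _ _ _ a i j.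
  move=> i j; rewrite /N (ipBl _ _ _ Hip) !(ipBr _ _ _ Hip) [ip (x j) (x i)](ipC _ _ _ Hip) !Ha /Gm.
  ring.
have N0 : forall i j, 0 <= N i j by move=> i j; exact: (ip_ge0 _ _ _ Hip).
have Ndiag : forall i, N i i = 0 by move=> i; rewrite /N subrr (ip0l _ _ _ Hip).
have Npos : forall i j : 'I_n, i != j -> 0 < N i j.
  move=> i j ij; rewrite lt0r N0 andbT; apply/eqP => /(ip_eq0 _ _ _ Hip) /eqP.
  by rewrite subr_eq0 => /eqP /hx /eqP; rewrite (negPf ij).
have PkG : forall s : R, 0 < s -> 0 <= Pk R n c N s.
  move=> s s0; rewrite /Pk.
  under eq_bigr do under eq_bigr do rewrite NG.
  exact: gaussPD (ltW s0).
have Hlt := snt _ _ _ _ _ ha0 ha1 cs N0 Ndiag Npos PkG (ex_intro _ i0 ci0).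
have E : forall i j, N i j `^ alpha = \sum_k (f i 0 k - f j 0 k) ^+ 2.
  move=> i j; have := Hf i j; rewrite /eucl_dist /ip_dist => H.
  have := congr1 (fun t => t ^+ 2) H; rewrite /= sqr_sqrtr; last first.
    by apply: sumr_ge0 => k _; exact: sqr_ge0.
  move=> ->; rewrite expr2 -powRM ?sqrtr_ge0 // -expr2 sqr_sqrtr //.
  exact: (ip_ge0 _ _ _ Hip).
have Heq : LL R n c N (fun t => t `^ alpha) = 0.
  rewrite /LL /=.
  under eq_bigr do under eq_bigr do rewrite E mulr_sumr.
  under eq_bigr do rewrite exchange_big.
  rewrite exchange_big; apply: big1 => k _.
  exact: quad0 cs (cf k).
by rewrite Heq ltxx in Hlt.
Qed.
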